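(* Let $d\ge1$, $\vec\gamma\in\mathbb{C}^d$, and let $b,\beta_1,\beta_2\in\mathbb{C}$ be nonzero. For nonzero $\beta\in\mathbb{C}$ and $\vec\delta\in\mathbb{C}^d$, and a point $\alpha\in L$ with $1+b\alpha^{\beta}=0$, let $\phi(\vec a;\vec\delta,b,\beta)$ denote a smooth map from a neighborhood of $\vec 0\in\mathbb{C}^d$ to $L$ satisfying $\phi(\vec 0;\vec\delta,b,\beta)=\alpha$ and \[ 1+b\,\phi(\vec a;\vec\delta,b,\beta)^{\beta}+\sum_{i=1}^d a_i\,\phi(\vec a;\vec\delta,b,\beta)^{\delta_i}=0 \] for all $\vec a$ in that neighborhood. Let $\alpha_1\in L$ satisfy $1+b\alpha_1^{\beta_1}=0$ and let $\phi(\vec a;\vec\gamma,b,\beta_1)$ be such a map with $\phi(\vec 0)=\alpha_1$. Let $\alpha_2\in L$ be the point with $\log\alpha_2=\beta_2^{-1}\log\alpha_1$ (so $\alpha_2=\alpha_1^{1/\beta_2}$), and let $\phi(\vec a;\beta_2\vec\gamma,b,\beta_2\beta_1)$ be such a map with exponents $\beta_2\vec\gamma$ and $\beta_2\beta_1$ and with $\phi(\vec 0)=\alpha_2$. Then, as Taylor series about $\vec a=\vec 0$, \[ \phi(\vec a;\vec\gamma,b,\beta_1)^{1/\beta_2}=\phi(\vec a;\beta_2\vec\gamma,b,\beta_2\beta_1). \]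
   Context: $L$ is the Riemann surface of the logarithm, parametrized by triples $(r,\theta,n)$ with $r>0$, $\theta\in(-\pi,\pi]$, $n\in\mathbb{Z}$; for $z=(r,\theta,n)\in L$ and $\gamma\in\mathbb{C}$, $z^\gamma=e^{\gamma\ln r+i\gamma\theta+2\pi i n\gamma}$, and $\log z=\ln r+i\theta+2\pi i n$ (a bijection $L\to\mathbb{C}$). Taylor series of $L$-valued maps are taken in the local coordinate $z\mapsto z^1$. Note $1+b\alpha_2^{\beta_2\beta_1}=1+b\alpha_1^{\beta_1}=0$. *)

(* Defs.v *)
From Stdlib Require Import Reals ZArith List.
From Coquelicot Require Import Coquelicot.
Open Scope R_scope.

Definition cexp (z : C) : C := (exp (Re z) * cos (Im z), exp (Re z) * sin (Im z)).

(* The Riemann surface of the logarithm: triples (r, theta, n),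
   r > 0, theta in (-pi, pi], n in Z. *)
Record Lpt : Type := mkL {
  Lr : R; Lth : R; Ln : Z;
  Lr_pos : 0 < Lr;
  Lth_rng : - PI < Lth <= PI }.

Definition Llog (z : Lpt) : C := (ln (Lr z), Lth z + 2 * PI * IZR (Ln z)).

Definition Lpow (z : Lpt) (g : C) : C := cexp (g * Llog z)%C.

(* Points of C^d are modelled as nat -> C vanishing at indices >= d. *)
Fixpoint csum (n : nat) (f : nat -> C) : C :=
  match n with O => RtoC 0 | S m => (csum m f + f m)%C end.

Definition vzero : nat -> C := fun _ => RtoC 0.
Definition vscal (c : C) (v : nat -> C) : nat -> C := fun i => (c * v i)%C.

Definition cube (d : nat) (eps : R) (a : nat -> C) : Prop :=
  (forall i, (i < d)%nat -> Cmod (a i) < eps) /\ (forall i, (d <= i)%nat -> a i = RtoC 0).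

(* real coordinate directions of C^d = R^{2d}: (i, false) = Re a_i, (i, true) = Im a_i *)
Definition dir (i : nat) (k : bool) : nat -> C :=
  fun j => if Nat.eqb j i then (if k then Ci else RtoC 1) else RtoC 0.

Definition shift (a : nat -> C) (t : R) (i : nat) (k : bool) : nat -> C :=
  fun j => (a j + RtoC t * dir i k j)%C.

Definition pd (ik : nat * bool) (F : (nat -> C) -> C) (a : nat -> C) : C :=
  (Derive.Derive (fun t => Re (F (shift a t (fst ik) (snd ik)))) 0,
   Derive.Derive (fun t => Im (F (shift a t (fst ik) (snd ik)))) 0).

Fixpoint iterD (vs : list (nat * bool)) (F : (nat -> C) -> C) : (nat -> C) -> C :=
  match vs with
  | nil => F
  | v :: ws => pd v (iterD ws F)
  end.

Definition dirs_ok (d : nat) (vs : list (nat * bool)) : Prop :=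
  List.Forall (fun ik => (fst ik < d)%nat) vs.

Definition cont_on_cube (d : nat) (eps : R) (F : (nat -> C) -> C) : Prop :=
  forall a, cube d eps a -> forall e, 0 < e -> exists delta, 0 < delta /\
    forall a', cube d eps a' -> (forall i, (i < d)%nat -> Cmod (a' i - a i)%C < delta) ->
      Cmod (F a' - F a)%C < e.

Definition smooth_on_cube (d : nat) (eps : R) (F : (nat -> C) -> C) : Prop :=
  forall vs, dirs_ok d vs ->
    cont_on_cube d eps (iterD vs F) /\
    forall a, cube d eps a -> forall i k, (i < d)%nat ->
      ex_derive (fun t => Re (iterD vs F (shift a t i k))) 0 /\
      ex_derive (fun t => Im (iterD vs F (shift a t i k))) 0.

(* Smoothness of an L-valued map: via the global holomorphic chart log : L -> C. *)
Definition smoothL_on_cube (d : nat) (eps : R) (phi : (nat -> C) -> Lpt) : Prop :=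
  smooth_on_cube d eps (fun a => Llog (phi a)).

Definition is_phi (d : nat) (delta : nat -> C) (b beta : C) (alpha : Lpt)
  (phi : (nat -> C) -> Lpt) : Prop :=
  exists eps, 0 < eps /\ smoothL_on_cube d eps phi /\ phi vzero = alpha /\
    forall a, cube d eps a ->
      (RtoC 1 + b * Lpow (phi a) beta + csum d (fun i => a i * Lpow (phi a) (delta i)))%C
        = RtoC 0.

(* Equality of Taylor series about 0 (in the real coordinates of C^d):
   all iterated partial derivatives at 0 coincide (order 0 included). *)
Definition same_taylor0 (d : nat) (F G : (nat -> C) -> C) : Prop :=
  forall vs, dirs_ok d vs -> iterD vs F vzero = iterD vs G vzero.

(* Main.v *)
Require Import Defs.
From Stdlib Require Import Reals ZArith List Lra Psatz.
From Coquelicot Require Import Coquelicot.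
Open Scope R_scope.

Lemma sin_bnd01 y : 0 <= y <= 1 -> y - y^3/6 <= sin y <= y.
Proof.
  intros Hy. assert (HP : 1 <= PI) by (pose proof PI2_1; lra) .
  pose proof (sin_bound y 0 ltac:(lra) ltac:(lra)) as [H1 H2].
  unfold sin_approx, sin_term in H1, H2. simpl in H1, H2.
  match type of H2 with context [y * (y * (y * (y * (y * 1)))) / ?D] => replace D with 120 in H2 by ring end.
  replace (1+1+1+1+1+1) with 6 in H1, H2 by ring.
  replace (y * (y * (y * (y * (y * 1))))) with (y^5) in H2 by ring.
  replace (y * (y * (y * 1))) with (y^3) in H1, H2 by ring.
  assert (0 <= y^3) by (apply pow_le; lra). assert (y^5 <= y^3) by (replace (y^5) with (y^3*(y*y)) by ring; rewrite <- (Rmult_1_r (y^3)) at 2; apply Rmult_le_compat_l; nra).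
  split; lra.
Qed.

Lemma sin_small y : Rabs y <= 1 -> Rabs (sin y) <= Rabs y /\ Rabs (sin y - y) <= Rabs y ^ 3 / 6.
Proof.
  intros Hy. destruct (Rle_dec 0 y) as [Hp|Hn].
  - pose proof (sin_bnd01 y ltac:(split_Rabs; lra)).
    assert (0 <= sin y) by (apply sin_ge_0; pose proof PI2_1; split_Rabs; lra).
    rewrite (Rabs_pos_eq y Hp). split; split_Rabs; lra.
  - pose proof (sin_bnd01 (-y) ltac:(split_Rabs; lra)).
    assert (0 <= sin (-y)) by (apply sin_ge_0; pose proof PI2_1; split_Rabs; lra).
    rewrite sin_neg in *. rewrite (Rabs_left y ltac:(lra)).
    replace ((-y)^3) with (-(y^3)) in * by ring. split; split_Rabs; lra.
Qed.

Lemma cos_small y : Rabs y <= 1 -> Rabs (cos y - 1) <= y^2/2.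
Proof.
  intros Hy. replace y with (2 * (y/2)) at 1 by field. rewrite cos_2a_sin.
  destruct (sin_small (y/2) ltac:(split_Rabs; lra)) as [H _].
  assert (Rabs (sin (y/2)) * Rabs (sin (y/2)) <= Rabs (y/2) * Rabs (y/2)).
  { apply Rmult_le_compat; auto using Rabs_pos. }
  rewrite <- !Rabs_mult in H0. rewrite !Rabs_pos_eq in H0 by nra.
  rewrite Rabs_left1 by nra. nra.
Qed.

Lemma exp_small x : Rabs x <= 1/2 -> Rabs (exp x - 1 - x) <= 2 * x^2.
Proof.
  intros Hx. pose proof (exp_ineq1_le x). pose proof (exp_ineq1_le (-x)).
  assert (E1 : exp x * exp (-x) = 1) by (rewrite <- exp_plus; replace (x + -x) with 0 by ring; apply exp_0).
  assert (E2 : exp x * (1 - x) <= 1).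
  { rewrite <- E1. apply Rmult_le_compat_l. left; apply exp_pos. lra. }
  assert (E3 : 1 <= (1 + x + 2 * x^2) * (1 - x)).
  { assert (0 <= x^2 * (1 - 2*x)) by (apply Rmult_le_pos; [apply pow2_ge_0| split_Rabs; lra]). nra. }
  assert (exp x <= 1 + x + 2 * x^2).
  { destruct (Rle_dec (exp x) (1 + x + 2 * x^2)) as [h|h]; auto.
    exfalso. assert ((1 + x + 2 * x^2) * (1 - x) < exp x * (1 - x)).
    { apply Rmult_lt_compat_r. split_Rabs; lra. lra. } lra. }
  rewrite Rabs_pos_eq; lra.
Qed.

Lemma Cmod_le_sum (z : C) : Cmod z <= Rabs (fst z) + Rabs (snd z).
Proof.
  destruct z as [a b].
  replace (a, b) with (RtoC a + RtoC b * Ci)%C.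
  2:{ unfold RtoC, Ci, Cplus, Cmult; simpl; f_equal; ring. }
  eapply Rle_trans; [apply Cmod_triangle|]. rewrite Cmod_mult, Cmod_Ci, !Cmod_R.
  simpl. replace (a + (b * 0 - 0 * 1)) with a by ring. replace (0 + (b * 1 + 0 * 0)) with b by ring. lra.
Qed.

Lemma im_le_Cmod (z : C) : Rabs (snd z) <= Cmod z.
Proof. eapply Rle_trans; [|apply Rmax_Cmod]. apply Rmax_r. Qed.
Lemma re_le_Cmod' (z : C) : Rabs (fst z) <= Cmod z.
Proof. eapply Rle_trans; [|apply Rmax_Cmod]. apply Rmax_l. Qed.

Lemma cexp_key h : Cmod h <= 1/2 -> Cmod (cexp h - RtoC 1 - h)%C <= 4 * Cmod h ^ 2.
Proof.
  intros Hh. pose proof (re_le_Cmod' h) as Hx. pose proof (im_le_Cmod h) as Hy.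
  pose proof (Cmod2_alt h) as Hc. pose proof (Cmod_ge_0 h).
  destruct h as [x y]; simpl in *.
  eapply Rle_trans; [apply Cmod_le_sum|]. unfold cexp, Cminus, Cplus, Copp, RtoC; simpl.
  pose proof (exp_small x ltac:(lra)) as E. pose proof (cos_small y ltac:(lra)) as Co.
  destruct (sin_small y ltac:(lra)) as [S1 S2]. pose proof (COS_bound y) as CB.
  replace (exp x * cos y + - (1) + - x) with ((exp x - 1 - x) * cos y + (1 + x) * (cos y - 1)) by ring.
  replace (exp x * sin y + - 0 + - y) with ((exp x - 1) * sin y + (sin y - y)) by ring.
  assert (R1 : Rabs ((exp x - 1 - x) * cos y) <= 2 * x^2).
  { rewrite Rabs_mult. assert (Rabs (cos y) <= 1) by (split_Rabs; lra).
    pose proof (Rabs_pos (exp x - 1 - x)). nra. }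
  assert (R2 : Rabs ((1 + x) * (cos y - 1)) <= 3/2 * (y^2/2)).
  { rewrite Rabs_mult. assert (Rabs (1 + x) <= 3/2) by (split_Rabs; lra).
    pose proof (Rabs_pos (cos y - 1)). pose proof (Rabs_pos (1 + x)). nra. }
  assert (R3 : Rabs ((exp x - 1) * sin y) <= 2 * Rabs x * Rabs y).
  { rewrite Rabs_mult. assert (Rabs (exp x - 1) <= 2 * Rabs x).
    { assert (x^2 = Rabs x * Rabs x) by (rewrite <- Rabs_mult; rewrite Rabs_pos_eq; nra).
      split_Rabs; nra. }
    pose proof (Rabs_pos (exp x - 1)). pose proof (Rabs_pos (sin y)). nra. }
  assert (R4 : Rabs y ^ 3 / 6 <= y^2).
  { assert (y^2 = Rabs y * Rabs y) by (rewrite <- Rabs_mult; rewrite Rabs_pos_eq; nra).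
    pose proof (Rabs_pos y). nra. }
  pose proof (Rabs_triang ((exp x - 1 - x) * cos y) ((1 + x) * (cos y - 1))).
  pose proof (Rabs_triang ((exp x - 1) * sin y) (sin y - y)).
  assert (2 * Rabs x * Rabs y <= x^2 + y^2).
  { assert (x^2 = Rabs x * Rabs x) by (rewrite <- Rabs_mult; rewrite Rabs_pos_eq; nra).
    assert (y^2 = Rabs y * Rabs y) by (rewrite <- Rabs_mult; rewrite Rabs_pos_eq; nra).
    pose proof (pow2_ge_0 (Rabs x - Rabs y)). nra. }
  assert (0 <= x^2) by nra. assert (0 <= y^2) by nra.
  rewrite Hc. lra.
Qed.

Lemma cexp_add p q : cexp (p + q)%C = (cexp p * cexp q)%C.
Proof.
  destruct p as [a b], q as [c e]. unfold cexp, Cplus, Cmult; simpl.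
  rewrite exp_plus, cos_plus, sin_plus. f_equal; ring.
Qed.

Lemma Cmod_cexp z : Cmod (cexp z) = exp (fst z).
Proof.
  destruct z as [x y]. unfold cexp, Cmod; simpl.
  replace (exp x * cos y * (exp x * cos y * 1) + exp x * sin y * (exp x * sin y * 1))
    with (exp x ^ 2 * ((sin y)² + (cos y)²)) by (unfold Rsqr; ring).
  rewrite sin2_cos2, Rmult_1_r. apply sqrt_pow2. left; apply exp_pos.
Qed.

Lemma cexp_lower h : Cmod h <= 1/8 -> Cmod h / 2 <= Cmod (cexp h - RtoC 1)%C.
Proof.
  intros H. pose proof (cexp_key h ltac:(lra)). pose proof (Cmod_ge_0 h).
  assert (Cmod h <= Cmod (cexp h - RtoC 1)%C + Cmod (cexp h - RtoC 1 - h)%C).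
  { replace h with ((cexp h - RtoC 1) + - (cexp h - RtoC 1 - h))%C at 1 by ring.
    eapply Rle_trans; [apply Cmod_triangle|]. rewrite Cmod_opp. lra. }
  nra.
Qed.

Lemma cexp_upper h : Cmod h <= 1/2 -> Cmod (cexp h - RtoC 1)%C <= 3 * Cmod h.
Proof.
  intros H. pose proof (cexp_key h H). pose proof (Cmod_ge_0 h).
  replace (cexp h - RtoC 1)%C with ((cexp h - RtoC 1 - h) + h)%C by ring.
  pose proof (Cmod_triangle (cexp h - RtoC 1 - h)%C h). nra.
Qed.

Lemma exp_mono x y : x <= y -> exp x <= exp y.
Proof. intros H. destruct (Rle_lt_or_eq_dec _ _ H) as [h|h]. left; apply exp_increasing; auto. subst; lra. Qed.

Fixpoint rsum (n : nat) (f : nat -> R) : R :=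
  match n with O => 0 | S m => rsum m f + f m end.

Lemma csum_ext n f g : (forall i, (i < n)%nat -> f i = g i) -> csum n f = csum n g.
Proof. induction n; intros H; simpl; auto. rewrite IHn by (intros; apply H; lia). rewrite H by lia. auto. Qed.

Lemma csum_minus n f g : (csum n f - csum n g)%C = csum n (fun i => f i - g i)%C.
Proof. induction n; simpl. ring. rewrite <- IHn. ring. Qed.

Lemma Cmod_csum n f : Cmod (csum n f) <= rsum n (fun i => Cmod (f i)).
Proof. induction n; simpl. rewrite Cmod_0; lra. eapply Rle_trans; [apply Cmod_triangle|]. lra. Qed.

Lemma rsum_le_scal n f g c : (forall i, (i < n)%nat -> f i <= c * g i) -> rsum n f <= c * rsum n g.
Proof. induction n; intros H; simpl. lra. rewrite Rmult_plus_distr_l.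
  apply Rplus_le_compat. apply IHn; intros; apply H; lia. apply H; lia. Qed.

Lemma rsum_nonneg n f : (forall i, 0 <= f i) -> 0 <= rsum n f.
Proof. induction n; intros H; simpl. lra. pose proof (H n). pose proof (IHn H). lra. Qed.

Lemma rsum_ge_term n f i : (forall i, 0 <= f i) -> (i < n)%nat -> f i <= rsum n f.
Proof. induction n; intros H Hi; simpl. lia.
  destruct (Nat.eq_dec i n). subst. pose proof (rsum_nonneg n f H). lra.
  pose proof (IHn H ltac:(lia)). pose proof (H n). lra. Qed.

Definition Feq d (gam : nat -> C) (b beta1 : C) (a : nat -> C) (z : C) : C :=
  (RtoC 1 + b * cexp (beta1 * z) + csum d (fun i => a i * cexp (gam i * z)))%C.

Lemma fst_ge (w : C) : - Cmod w <= fst w.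
Proof. pose proof (re_le_Cmod' w). split_Rabs; lra. Qed.
Lemma fst_le (w : C) : fst w <= Cmod w.
Proof. pose proof (re_le_Cmod' w). split_Rabs; lra. Qed.

Lemma cexp_diff (g z z' : C) :
  (cexp (g * z) - cexp (g * z'))%C = (cexp (g * z') * (cexp (g * (z - z')) - RtoC 1))%C.
Proof.
  replace (g * z)%C with (g * z' + g * (z - z'))%C by ring. rewrite cexp_add. ring.
Qed.

Lemma uniq d gam b beta1 z0 : b <> RtoC 0 -> beta1 <> RtoC 0 ->
  exists r, 0 < r /\ exists dl, 0 < dl /\ forall a z z',
    (forall i, (i < d)%nat -> Cmod (a i) < dl) -> Cmod (z - z0)%C < r -> Cmod (z' - z0)%C < r ->
    Feq d gam b beta1 a z = RtoC 0 -> Feq d gam b beta1 a z' = RtoC 0 -> z = z'.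
Proof.
  intros Hb Hb1.
  set (G' := rsum d (fun i => Cmod (gam i))).
  assert (HG' : 0 <= G') by (apply rsum_nonneg; intros; apply Cmod_ge_0).
  set (G := G' + Cmod beta1 + 1).
  assert (HG : 1 <= G) by (pose proof (Cmod_ge_0 beta1); unfold G; lra).
  set (A := Cmod z0 + 1).
  set (m := exp (- (Cmod beta1 * A))). set (Mx := exp (G * A)).
  assert (Hm : 0 < m) by apply exp_pos. assert (HM : 0 < Mx) by apply exp_pos.
  assert (Hcb : 0 < Cmod b) by (apply Cmod_gt_0; auto).
  assert (Hcb1 : 0 < Cmod beta1) by (apply Cmod_gt_0; auto).
  set (K := Cmod b * m * Cmod beta1).
  assert (HK : 0 < K) by (unfold K; apply Rmult_lt_0_compat; [apply Rmult_lt_0_compat|]; auto).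
  exists (Rmin 1 (1 / (16 * G))). split.
  { apply Rmin_glb_lt. lra. apply Rdiv_lt_0_compat; lra. }
  exists (K / (12 * Mx * G)). split.
  { apply Rdiv_lt_0_compat; auto. apply Rmult_lt_0_compat; lra. }
  intros a z z' Ha Hz Hz' Fz Fz'.
  pose proof (Rmin_l 1 (1 / (16 * G))). pose proof (Rmin_r 1 (1 / (16 * G))).
  set (D := (z - z')%C).
  assert (HD : Cmod D <= 1 / (8 * G)).
  { unfold D. replace (z - z')%C with ((z - z0) + - (z' - z0))%C by ring.
    eapply Rle_trans; [apply Cmod_triangle|]. rewrite Cmod_opp.
    replace (1 / (8 * G)) with (2 * (1 / (16 * G))) by (field; lra). lra. }
  assert (HD0 : 0 <= Cmod D) by apply Cmod_ge_0.
  assert (Hz'A : Cmod z' <= A).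
  { unfold A. replace z' with (z0 + (z' - z0))%C at 1 by ring.
    eapply Rle_trans; [apply Cmod_triangle|]. lra. }
  assert (Eq : (b * (cexp (beta1 * z) - cexp (beta1 * z')) +
                csum d (fun i => a i * (cexp (gam i * z) - cexp (gam i * z'))))%C = RtoC 0).
  { rewrite <- (csum_ext d (fun i => a i * cexp (gam i * z) - a i * cexp (gam i * z'))%C)
      by (intros; ring).
    rewrite <- csum_minus.
    replace (RtoC 0) with (Feq d gam b beta1 a z - Feq d gam b beta1 a z')%C
      by (rewrite Fz, Fz'; ring).
    unfold Feq. ring. }
  set (X := (b * (cexp (beta1 * z) - cexp (beta1 * z')))%C) in Eq.
  set (Y := csum d (fun i => a i * (cexp (gam i * z) - cexp (gam i * z')))%C) in Eq.
  assert (EXY : Cmod X = Cmod Y).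
  { replace X with (- Y)%C by (rewrite <- (Cplus_0_l (-Y)), <- Eq; ring). apply Cmod_opp. }
  assert (LX : K * Cmod D / 2 <= Cmod X).
  { unfold X. rewrite cexp_diff. rewrite !Cmod_mult. fold D.
    rewrite Cmod_cexp.
    assert (m <= exp (fst (beta1 * z')%C)).
    { apply exp_mono. pose proof (fst_ge (beta1 * z')%C). rewrite Cmod_mult in H1.
      assert (Cmod beta1 * Cmod z' <= Cmod beta1 * A) by (apply Rmult_le_compat_l; lra). lra. }
    assert (Cmod (beta1 * D)%C <= 1/8).
    { rewrite Cmod_mult. assert (Cmod beta1 <= G) by (unfold G; lra).
      replace (1/8) with (G * (1 / (8 * G))) by (field; lra).
      apply Rmult_le_compat; auto using Cmod_ge_0. }
    pose proof (cexp_lower _ H2). rewrite Cmod_mult in H3.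
    unfold K.
    assert (m * (Cmod beta1 * Cmod D / 2) <= exp (fst (beta1 * z')%C) * Cmod (cexp (beta1 * D) - RtoC 1)%C).
    { apply Rmult_le_compat; try lra. apply Rmult_le_pos; [apply Rmult_le_pos|]; lra. }
    apply Rle_trans with (Cmod b * (m * (Cmod beta1 * Cmod D / 2))). right; unfold Rdiv; ring.
    apply Rmult_le_compat_l; lra. }
  assert (UY : Cmod Y <= (K / (12 * Mx * G) * Mx * 3 * Cmod D) * G').
  { unfold Y. eapply Rle_trans; [apply Cmod_csum|]. apply rsum_le_scal.
    intros i Hi. rewrite cexp_diff, !Cmod_mult, Cmod_cexp. fold D.
    assert (HgG : Cmod (gam i) <= G).
    { pose proof (rsum_ge_term d (fun i => Cmod (gam i)) i ltac:(intros; apply Cmod_ge_0) Hi).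
      fold G' in H1. unfold G. pose proof (Cmod_ge_0 beta1). lra. }
    assert (exp (fst (gam i * z')%C) <= Mx).
    { apply exp_mono. pose proof (fst_le (gam i * z')%C). rewrite Cmod_mult in H1.
      assert (Cmod (gam i) * Cmod z' <= G * A).
      { apply Rmult_le_compat; auto using Cmod_ge_0. }
      lra. }
    assert (Cmod (gam i * D)%C <= 1/2).
    { rewrite Cmod_mult. replace (1/2) with (G * (1 / (8 * G)) * 4) by (field; lra).
      assert (Cmod (gam i) * Cmod D <= G * (1 / (8 * G))) by (apply Rmult_le_compat; auto using Cmod_ge_0).
      assert (0 <= G * (1 / (8 * G))) by (apply Rmult_le_pos; [lra| apply Rlt_le, Rdiv_lt_0_compat; lra]).
      lra. }
    pose proof (cexp_upper _ H2). rewrite Cmod_mult in H3.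
    pose proof (Ha i Hi).
    assert (0 <= exp (fst (gam i * z')%C)) by (left; apply exp_pos).
    assert (0 <= Cmod (cexp (gam i * D) - RtoC 1)%C) by apply Cmod_ge_0.
    assert (0 <= Cmod (a i)) by apply Cmod_ge_0.
    assert (exp (fst (gam i * z')%C) * Cmod (cexp (gam i * D) - RtoC 1)%C <= Mx * (3 * (Cmod (gam i) * Cmod D))).
    { apply Rmult_le_compat; auto. }
    set (dl := K / (12 * Mx * G)) in *.
    assert (Cmod (a i) * (exp (fst (gam i * z')%C) * Cmod (cexp (gam i * D) - RtoC 1)%C) <= dl * (Mx * (3 * (Cmod (gam i) * Cmod D)))).
    { apply Rmult_le_compat; [auto| apply Rmult_le_pos; auto | lra | auto]. }
    rewrite Rmult_assoc. eapply Rle_trans; [exact H9|]. right; ring. }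
  assert (E2 : K / (12 * Mx * G) * Mx * 3 * Cmod D * G' <= K * Cmod D / 4).
  { replace (K * Cmod D / 4) with (K / (12 * Mx * G) * Mx * 3 * Cmod D * G) by (field; lra).
    apply Rmult_le_compat_l. apply Rmult_le_pos; [|lra].
    apply Rmult_le_pos; [|lra]. apply Rmult_le_pos; [|lra]. apply Rlt_le, Rdiv_lt_0_compat; [lra|].
    apply Rmult_lt_0_compat; lra. unfold G; lra. }
  assert (Cmod D = 0) by nra.
  apply Cmod_eq_0 in H1. unfold D in H1.
  replace z with ((z - z') + z')%C by ring. rewrite H1. ring.
Qed.

Lemma cube_vzero d eps : 0 < eps -> cube d eps vzero.
Proof. intros H; split; intros; unfold vzero; try rewrite Cmod_0; auto. Qed.

Lemma shift_cube d rho (a : nat -> C) (t : R) (i : nat) (k : bool) : cube d rho a -> (i < d)%nat -> Rabs t < rho - Cmod (a i) ->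
  cube d rho (Defs.shift a t i k).
Proof.
  intros [H1 H2] Hi Ht. unfold Defs.shift, dir. split.
  - intros j Hj. destruct (Nat.eqb_spec j i).
    + subst. eapply Rle_lt_trans; [apply Cmod_triangle|]. rewrite Cmod_mult, Cmod_R.
      destruct k; [rewrite Cmod_Ci| rewrite Cmod_1]; lra.
    + replace (a j + RtoC t * RtoC 0)%C with (a j) by ring. auto.
  - intros j Hj. destruct (Nat.eqb_spec j i). lia.
    rewrite H2 by auto. ring.
Qed.

Lemma iterD_local d rho F G : 0 < rho -> (forall a, cube d rho a -> F a = G a) ->
  forall vs, dirs_ok d vs -> forall a, cube d rho a -> iterD vs F a = iterD vs G a.
Proof.
  intros Hr HFG vs. induction vs as [|[i k] ws IH]; intros Hok a Ha; simpl; auto.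
  inversion Hok; subst. simpl in H1.
  assert (Hloc : locally 0 (fun t => cube d rho (Defs.shift a t i k))).
  { assert (He : 0 < rho - Cmod (a i)) by (destruct Ha as [Ha _]; specialize (Ha i H1); lra).
    exists (mkposreal _ He). intros y Hy. apply shift_cube; auto.
    unfold ball in Hy; simpl in Hy; unfold AbsRing_ball, abs, minus, plus, opp in Hy; simpl in Hy.
    change (Rabs (y + - 0) < rho - Cmod (a i)) in Hy. rewrite Ropp_0, Rplus_0_r in Hy. exact Hy. }
  unfold pd; simpl. f_equal; apply Derive_ext_loc; eapply filter_imp; try exact Hloc;
    intros t Ht; simpl; rewrite IH; auto.
Qed.

Theorem theorem4p1 (d : nat) (gamma : nat -> C) (b beta1 beta2 : C)
  (alpha1 alpha2 : Lpt) (phi1 phi2 : (nat -> C) -> Lpt) :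
  (1 <= d)%nat ->
  b <> RtoC 0 -> beta1 <> RtoC 0 -> beta2 <> RtoC 0 ->
  (RtoC 1 + b * Lpow alpha1 beta1)%C = RtoC 0 ->
  is_phi d gamma b beta1 alpha1 phi1 ->
  Llog alpha2 = (/ beta2 * Llog alpha1)%C ->
  is_phi d (vscal beta2 gamma) b (beta2 * beta1)%C alpha2 phi2 ->
  same_taylor0 d (fun a => Lpow (phi1 a) (/ beta2)%C)
                 (fun a => Lpow (phi2 a) (RtoC 1)).
Proof.
  intros Hd Hb Hb1 Hb2 _ [e1 [He1 [Hs1 [H01 Heq1]]]] Hlog [e2 [He2 [Hs2 [H02 Heq2]]]].
  destruct (uniq d gamma b beta1 (Llog alpha1) Hb Hb1) as [r [Hr [dl [Hdl Hu]]]].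
  destruct (proj1 (Hs1 nil (Forall_nil _)) vzero (cube_vzero d e1 He1) r Hr) as [d1 [Hd1 C1]].
  assert (Hcb2 : 0 < Cmod beta2) by (apply Cmod_gt_0; auto).
  assert (Hr2 : 0 < r / Cmod beta2) by (apply Rdiv_lt_0_compat; auto).
  destruct (proj1 (Hs2 nil (Forall_nil _)) vzero (cube_vzero d e2 He2) _ Hr2) as [d2 [Hd2 C2]].
  simpl in C1, C2.
  set (rho := Rmin (Rmin e1 e2) (Rmin dl (Rmin d1 d2))).
  assert (Hrho : 0 < rho).
  { unfold rho. repeat apply Rmin_glb_lt; auto. }
  assert (Hsub : forall a e, cube d rho a -> rho <= e -> cube d e a).
  { intros a e [Ha1 Ha2] He. split; auto. intros i Hi. specialize (Ha1 i Hi). lra. }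
  assert (Hr1 : rho <= e1) by (unfold rho; eapply Rle_trans; apply Rmin_l).
  assert (Hr2' : rho <= e2) by (unfold rho; eapply Rle_trans; [apply Rmin_l| apply Rmin_r]).
  assert (Hr3 : rho <= dl) by (unfold rho; eapply Rle_trans; [apply Rmin_r| apply Rmin_l]).
  assert (Hr4 : rho <= d1) by (unfold rho; eapply Rle_trans; [apply Rmin_r|]; eapply Rle_trans; [apply Rmin_r| apply Rmin_l]).
  assert (Hr5 : rho <= d2) by (unfold rho; eapply Rle_trans; [apply Rmin_r|]; eapply Rle_trans; [apply Rmin_r| apply Rmin_r]).
  assert (Hsmall : forall a, cube d rho a -> forall i, (i < d)%nat -> Cmod (a i - vzero i)%C < rho).
  { intros a [Ha _] i Hi. unfold vzero. replace (a i - RtoC 0)%C with (a i) by ring. auto. }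
  assert (Key : forall a, cube d rho a -> Llog (phi1 a) = (beta2 * Llog (phi2 a))%C).
  { intros a Ha. apply (Hu a).
    - intros i Hi. destruct Ha as [Ha _]. specialize (Ha i Hi). lra.
    - rewrite <- H01. apply C1. apply Hsub; auto. intros i Hi. specialize (Hsmall a Ha i Hi). lra.
    - replace (Llog alpha1) with (beta2 * Llog (phi2 vzero))%C.
      2:{ rewrite H02, Hlog. field. auto. }
      replace (beta2 * Llog (phi2 a) - beta2 * Llog (phi2 vzero))%C
        with (beta2 * (Llog (phi2 a) - Llog (phi2 vzero)))%C by ring.
      rewrite Cmod_mult.
      assert (Cmod (Llog (phi2 a) - Llog (phi2 vzero))%C < r / Cmod beta2).
      { apply C2. apply Hsub; auto. intros i Hi. specialize (Hsmall a Ha i Hi). lra. }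
      replace r with (Cmod beta2 * (r / Cmod beta2)) by (field; lra).
      apply Rmult_lt_compat_l; auto.
    - apply Heq1. apply Hsub; auto.
    - pose proof (Heq2 a (Hsub a e2 Ha Hr2')) as E. unfold Feq, Lpow in *.
      rewrite <- E. f_equal. f_equal. f_equal. f_equal. ring.
      apply csum_ext. intros i Hi. unfold vscal. f_equal. f_equal. ring. }
  intros vs Hvs. apply (iterD_local d rho); auto.
  - intros a Ha. unfold Lpow. rewrite Key by auto. f_equal. field. auto.
  - apply cube_vzero; auto.
Qed.
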